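(* Let $S\subseteq\mathbb{R}^n\times\mathbb{R}^m$ be convex, let (MOCP) be self-bounded, fix $p\in[1,\infty]$ and $\epsilon>0$. If $\bar S\subseteq S$ is a finite $\epsilon$-solution of (MOCP) (under the $p$-norm), then $\bar S$ is a finite $(\overline{\kappa}\epsilon)$-solution of (CP) (under the $p$-norm), where $\overline{\kappa}=\overline{\kappa}(m,p)=\left(\frac{m^p+m-1}{m+1}\right)^{1/p}$ (equal to $m$ for $p=\infty$).
   Context: $\|\cdot\|_p$ is the $p$-norm and $B_\epsilon$ the closed $\epsilon$-ball around $0$. (CP): compute $Y=\{y:\exists x,(x,y)\in S\}$; recession cone $A_\infty=\{y: x+\lambda y\in A\ \forall x\in A,\lambda\ge0\}$. A nonempty finite $\bar S\subseteq S$ is a finite $\epsilon$-solution of a self-bounded (CP) if $Y\subseteq\operatorname{conv}\operatorname{proj}_y[\bar S]+(\operatorname{cl}Y)_\infty+B_\epsilon$ (where (CP) self-bounded means $Y\neq\mathbb{R}^m$ and $Y\subseteq\operatorname{conv}\{y^{(1)},\dots,y^{(k)}\}+(\operatorname{cl}Y)_\infty$ for finitely many points). (MOCP): minimize $P(x,y)=(y,-\mathbf{1}^\top y)$ ($\mathbf{1}\in\mathbb{R}^m$ all-ones) w.r.t. $\le_{\mathbb{R}^{m+1}_+}$ over $(x,y)\in S$, upper image $\mathcal{P}=\operatorname{cl}(P[S]+\mathbb{R}^{m+1}_+)$; (MOCP) is self-bounded if $\mathcal{P}\ne\mathbb{R}^{m+1}$ and $\mathcal{P}\subseteq\{q\}+\mathcal{P}_\infty$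 for some $q$. With $\mathbb{1}\in\mathbb{R}^{m+1}$ the all-ones vector, a nonempty finite $\bar S\subseteq S$ is a finite $\epsilon$-solution of (MOCP) if $\mathcal{P}\subseteq\operatorname{conv}P[\bar S]+\mathcal{P}_\infty-\epsilon\{\|\mathbb{1}\|_p^{-1}\mathbb{1}\}$. *)

(* Defs.v *)
From HB Require Import structures.
From mathcomp Require Import all_boot all_order all_algebra.
From mathcomp Require Import all_classical all_reals all_analysis.
Set Implicit Arguments. Unset Strict Implicit. Unset Printing Implicit Defensive.
Import Order.TTheory GRing.Theory Num.Theory.
Import numFieldNormedType.Exports.
Local Open Scope classical_set_scope.
Local Open Scope ring_scope.

Section Defs.
Variable R : realType.

Definition pnorm (p : \bar R) (k : nat) (x : 'rV[R]_k) : R :=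
  match p with
  | EFin r => (\sum_(i < k) `|x 0 i| `^ r) `^ r^-1
  | _ => \big[Num.max/0]_(i < k) `|x 0 i|
  end.

Definition pball (p : \bar R) (k : nat) (e : R) : set 'rV[R]_k :=
  [set x | pnorm p x <= e].

Definition msum (k : nat) (A B : set 'rV[R]_k) : set 'rV[R]_k :=
  [set a + b | a in A & b in B].

Definition conv (k : nat) (A : set 'rV[R]_k) : set 'rV[R]_k :=
  [set z | exists (N : nat) (lam : 'I_N -> R) (a : 'I_N -> 'rV[R]_k),
     [/\ forall i, 0 <= lam i, \sum_(i < N) lam i = 1,
         forall i, A (a i) & z = \sum_(i < N) lam i *: a i]].

Definition recc (k : nat) (A : set 'rV[R]_k) : set 'rV[R]_k :=
  [set y | forall x, A x -> forall l : R, 0 <= l -> A (x + l *: y)].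

Definition orthant (k : nat) : set 'rV[R]_k := [set v | forall i, 0 <= v 0 i].

Definition convex_prod (n m : nat) (S : set ('rV[R]_n * 'rV[R]_m)) :=
  forall a b, S a -> S b -> forall t : R, 0 <= t <= 1 ->
    S (t *: a.1 + (1 - t) *: b.1, t *: a.2 + (1 - t) *: b.2).

Definition CP_Y (n m : nat) (S : set ('rV[R]_n * 'rV[R]_m)) : set 'rV[R]_m :=
  snd @` S.

Definition Pobj (n m : nat) (z : 'rV[R]_n * 'rV[R]_m) : 'rV[R]_(m + 1) :=
  row_mx z.2 (\row_(_ < 1) (- \sum_(i < m) z.2 0 i)).

Definition upper_image (n m : nat) (S : set ('rV[R]_n * 'rV[R]_m))
  : set 'rV[R]_(m + 1) :=
  closure (msum ((@Pobj n m) @` S) (@orthant (m + 1))).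

Definition MOCP_self_bounded (n m : nat) (S : set ('rV[R]_n * 'rV[R]_m)) :=
  upper_image S != setT /\
  exists q : 'rV[R]_(m + 1),
    upper_image S `<=` msum [set q] (recc (upper_image S)).

Definition MOCP_finite_eps_sol (p : \bar R) (e : R) (n m : nat)
  (S Sbar : set ('rV[R]_n * 'rV[R]_m)) :=
  [/\ finite_set Sbar, Sbar !=set0, Sbar `<=` S &
   upper_image S `<=`
     msum (msum (conv ((@Pobj n m) @` Sbar)) (recc (upper_image S)))
          [set - ((e / pnorm p (const_mx 1 : 'rV[R]_(m + 1))) *: const_mx 1)]].

Definition CP_finite_eps_sol (p : \bar R) (e : R) (n m : nat)
  (S Sbar : set ('rV[R]_n * 'rV[R]_m)) :=
  [/\ finite_set Sbar, Sbar !=set0, Sbar `<=` S &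
   CP_Y S `<=`
     msum (msum (conv (snd @` Sbar)) (recc (closure (CP_Y S))))
          (pball p e)].

Definition kappa_bar (m : nat) (p : \bar R) : R :=
  match p with
  | EFin r => ((m%:R `^ r + m%:R - 1) / (m%:R + 1)) `^ r^-1
  | _ => m%:R
  end.

End Defs.

(* Main.v *)
Require Import Defs.
From HB Require Import structures.
From mathcomp Require Import all_boot all_order all_algebra.
From mathcomp Require Import all_classical all_reals all_analysis.
From mathcomp Require Import ring lra.
Import Order.TTheory GRing.Theory Num.Theory.
Import numFieldNormedType.Exports.
Local Open Scope classical_set_scope.
Local Open Scope ring_scope.


Lemma closure_rVP (R : realType) k (A : set 'rV[R]_k) x :
  closure A x <-> forall e : R, 0 < e -> exists a, A a /\ forall i, `|x 0 i - a 0 i| < e.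
Proof.
split.
- move=> cl e e0.
  have /cl [a [Aa ba]] : nbhs x (ball x e) by apply: nbhsx_ballx.
  exists a; split => // i.
  by case: ba => _ /(_ ord0 i); rewrite /ball /=.
- move=> H B /nbhs_ballP [e /= e0 sB].
  have [a [Aa Ha]] := H e e0.
  exists a; split => //; apply: sB; split => // i j.
  by rewrite ord1 /ball /=; apply: Ha.
Qed.

Lemma le_sum1 (R : realType) k (F : 'I_k -> R) i :
  (forall j, 0 <= F j) -> F i <= \sum_j F j.
Proof.
move=> F0; rewrite (bigD1 i) //= lerDl; apply: sumr_ge0 => j _; exact: F0.
Qed.

Lemma cluster_use (R : realType) m (ut : nat -> 'rV[R]_m) u :
  cluster (ut @ \oo) u -> forall (N0 : nat) (e : R), 0 < e ->
  exists N, (N0 <= N)%N /\ forall i, `|ut N 0 i - u 0 i| < e.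
Proof.
move=> cl N0 e e0.
have [v [[N /= hN <-] hv]] := cl (ut @` [set N | (N0 <= N)%N]) (ball u e)
  (ltac:(exists N0 => // n /= hn; exists n => //)) (nbhsx_ballx _ _ e0).
exists N; split => // i.
case: hv => _ /(_ ord0 i); rewrite /ball /= distrC //.
Qed.

Lemma exists_big (R : realType) (x : R) : exists N : nat, x < N.+1%:R.
Proof.
exists (Num.bound `|x|); apply: le_lt_trans (ler_norm x) _.
apply: lt_trans (archi_boundP _) _ => //; by rewrite ltr_nat.
Qed.

Lemma key_rec (R : realType) m (Y : set 'rV[R]_m) (y0 w : 'rV[R]_m)
  (yN uN : nat -> 'rV[R]_m) (u : 'rV[R]_m) :
  (forall a b, Y a -> Y b -> forall t : R, 0 <= t <= 1 -> Y (t *: a + (1 - t) *: b)) ->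
  (forall N, Y (yN N)) ->
  (forall N i, `|yN N 0 i + uN N 0 i - y0 0 i - N.+1%:R * w 0 i| < 1) ->
  cluster ((fun N => N.+1%:R^-1 *: uN N) @ \oo) u ->
  recc (closure Y) (w - u).
Proof.
move=> convY YN hN clu x clx l l0.
apply/closure_rVP => eps eps0.
have eps3 : 0 < eps / 3 by rewrite divr_gt0.
have [x' [Yx' hx']] := proj1 (@closure_rVP _ _ Y x) clx _ eps3.
pose D := \sum_i `|x' 0 i - y0 0 i|.
have D0 : 0 <= D by apply: sumr_ge0 => i _.
pose B := l * (1 + D).
have B0 : 0 <= B by rewrite mulr_ge0 // addr_ge0.
have [N1 hN1] := @exists_big _ (3 * B / eps + l).
have l1 : 0 < l + 1 by lra.
have dl : 0 < eps / 3 / (l + 1) by rewrite divr_gt0.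
have [N [N1N hu]] := @cluster_use _ _ _ _ clu N1 _ dl.
have Npos : 0 < N.+1%:R :> R by rewrite ltr0Sn.
have hNN : N1.+1%:R <= N.+1%:R :> R by rewrite ler_nat.
pose s := l / N.+1%:R.
have s0 : 0 <= s by rewrite divr_ge0 // ltW.
have s1 : s <= 1.
  rewrite /s ler_pdivrMr // mul1r.
  have : 0 <= 3 * B / eps.
    apply: divr_ge0 _ (ltW eps0); apply: mulr_ge0 _ B0; lra.
  lra.
have sN : s * N.+1%:R = l by rewrite /s divfK // gt_eqF.
have sB : s * (1 + D) < eps / 3.
  have : 3 * B / eps < N.+1%:R by lra.
  rewrite ltr_pdivrMr // => h.
  rewrite /s mulrAC ltr_pdivrMr // -/B.
  lra.
exists ((1 - s) *: x' + (1 - (1 - s)) *: yN N); split.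
  by apply: convY => //; apply/andP; split; lra.
move=> i.
rewrite !mxE.
set a := x 0 i - x' 0 i.
set b := x' 0 i - y0 0 i.
set cc := u 0 i - N.+1%:R^-1 * uN N 0 i.
set E := yN N 0 i + uN N 0 i - y0 0 i - N.+1%:R * w 0 i.
have -> : x 0 i + l * (w 0 i - u 0 i) - ((1 - s) * x' 0 i + (1 - (1 - s)) * yN N 0 i)
    = a + s * b - l * cc - s * E.
  rewrite /a /b /cc /E -sN; field.
  by rewrite gt_eqF.
have ha : `|a| < eps / 3 by apply: hx'.
have hb : `|b| <= D by apply: (@le_sum1 _ _ (fun j => `|x' 0 j - y0 0 j|)) => j.
have hc : `|cc| < eps / 3 / (l + 1).
  by rewrite /cc distrC; have := hu i; rewrite mxE.
have hE : `|E| < 1 by apply: hN.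
have T1 : `|a + s * b - l * cc - s * E| <= `|a| + s * `|b| + l * `|cc| + s * `|E|.
  apply: le_trans (ler_normB _ _) _.
  apply: le_trans (lerD (ler_normB _ _) (lexx _)) _.
  apply: le_trans (lerD (lerD (ler_normD _ _) (lexx _)) (lexx _)) _.
  have ns z : `|s * z| = s * `|z| by rewrite normrM (ger0_norm s0).
  have nl z : `|l * z| = l * `|z| by rewrite normrM (ger0_norm l0).
  by rewrite !ns nl.
apply: le_lt_trans T1 _.
have h2 : s * `|b| <= s * D by rewrite ler_wpM2l.
have h3 : l * `|cc| <= l * (eps / 3 / (l + 1)) by rewrite ler_wpM2l // ltW.
have h4 : s * `|E| <= s * 1 by rewrite ler_wpM2l // ltW.
have h5 : l * (eps / 3 / (l + 1)) <= eps / 3.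
  rewrite mulrA ler_pdivrMr //; nra.
move: h2 h3 h4 h5 sB ha; set q1 := s * `|b|; set q2 := l * `|cc|; set q3 := s * `|E|.
set q4 := l * _; set q5 := s * (1 + D).
have : q5 = s * D + s * 1 by rewrite /q5 mulrDr mulr1 addrC.
move: (s * D) (s * 1) => sD s1' hq5.
lra.
Qed.

Lemma key_cluster (R : realType) m (uN : nat -> 'rV[R]_m) (c K0 : R) :
  0 <= K0 ->
  (forall N i, 0 <= uN N 0 i) ->
  (forall N, \sum_i uN N 0 i <= N.+1%:R * c + K0) ->
  exists u : 'rV[R]_m, [/\ forall i, 0 <= u 0 i,
    cluster ((fun N => N.+1%:R^-1 *: uN N) @ \oo) u & \sum_i u 0 i <= c].
Proof.
move=> K00 u0 usum.
pose ut N := N.+1%:R^-1 *: uN N.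
have ut0 N i : 0 <= ut N 0 i by rewrite /ut mxE mulr_ge0 // invr_ge0.
have utsum N : \sum_i ut N 0 i <= c + K0 / N.+1%:R.
  rewrite /ut (eq_bigr (fun i => N.+1%:R^-1 * uN N 0 i)); last by move=> i _; rewrite mxE.
  rewrite -mulr_sumr ler_pdivrMl ?ltr0Sn // mulrDr mulrCA divff ?mulr1 //.
pose C := c + K0.
have utC N i : ut N 0 i <= C.
  apply: le_trans (@le_sum1 _ _ (fun j => ut N 0 j) i (ut0 N)) _; apply: le_trans (utsum N) _.
  rewrite /C lerD2l ler_pdivrMr ?ltr0Sn // ler_peMr // ler1n //.
pose Box := [set v : 'rV[R]_m | forall i, `[0, C]%classic (v ord0 i)].
have cBox : compact Box.
  by apply: (@rV_compact _ _ (fun=> `[0, C]%classic)) => _; apply: segment_compact.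
have FBox : (ut @ \oo) Box.
  by exists 0%N => // N _ i /=; rewrite in_itv /= ut0 utC.
have [u [Bu clu]] := cBox _ _ FBox.
exists u; split => //.
- by move=> i; have := Bu i; rewrite /= in_itv /= => /andP[].
- apply/ler_addgt0Pr => e e0.
  have m10 : 0 < m.+1%:R :> R by rewrite ltr0Sn.
  have [N1 hN1] : exists N1 : nat, 2 * K0 / e < N1.+1%:R.
    exists (Num.bound (2 * K0 / e)); apply: lt_trans (archi_boundP _) _.
      by rewrite divr_ge0 ?mulr_ge0 ?(ltW e0).
    by rewrite ltr_nat.
  have e2 : 0 < e / 2 / m.+1%:R by rewrite !divr_gt0.
  have [N [hN hi]] := @cluster_use _ _ _ _ clu N1 _ e2.
  set d := e / 2 / m.+1%:R in e2 hi.
  have h1 : \sum_i u 0 i <= \sum_i (ut N 0 i + d).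
    apply: ler_sum => i _.
    have := hi i; rewrite ltr_norml => /andP[h _]; lra.
  apply: le_trans h1 _; rewrite big_split /= sumr_const card_ord.
  have h2 : K0 / N.+1%:R <= e / 2.
    rewrite ler_pdivrMr ?ltr0Sn //.
    have : N1.+1%:R <= N.+1%:R :> R by rewrite ler_nat.
    rewrite ltr_pdivrMr // in hN1.
    move=> hh; nra.
  have h3 : d *+ m <= e / 2.
    have hd : d * m.+1%:R = e / 2 by rewrite /d divfK // gt_eqF.
    by rewrite -mulr_natr -hd ler_pM2l // ler_nat.
  apply: le_trans (lerD (utsum N) (lexx _)) _.
  move: h3 h2; set q := d *+ m; set r := K0 / _; lra.
Qed.

Lemma powR_le (R : realType) (r a b : R) : 0 <= r -> 0 <= a -> a <= b -> a `^ r <= b `^ r.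
Proof.
move=> r0 a0 ab; apply: (@ge0_ler_powR R r r0) => //; rewrite nnegrE //; lra.
Qed.



Lemma scal_ineq (R : realType) (m v r : R) : 1 <= m -> 0 <= v -> v <= m + 1 -> 1 <= r ->
  `|v - 1| `^ r <= 1 + v * (m `^ r - 1) / (m + 1).
Proof.
move=> m1 v0 vm r1.
have r0 : 0 <= r by lra.
have Mge1 : 1 <= m `^ r.
  have h := @powR_le R r 1 m r0 ler01 m1; rewrite powR1 in h; exact h.
have m10 : 0 < m + 1 by lra.
have hrhs : 1 <= 1 + v * (m `^ r - 1) / (m + 1).
  rewrite lerDl; apply: divr_ge0 _ (ltW m10); rewrite mulr_ge0 // subr_ge0 //.
case: (lerP v 1) => hv.
- apply: le_trans hrhs.
  have : `|v - 1| <= 1 by rewrite ler_norml; apply/andP; split; lra.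
  move/(@powR_le R r _ _ r0 (normr_ge0 _)) => h; rewrite powR1 in h.
  by move: h; rewrite distrC ger0_norm // subr_ge0.
- set x := v - 1.
  have x0 : 0 <= x by rewrite /x; lra.
  have xm : x <= m by rewrite /x; lra.
  have pD z : 0 <= z -> z `^ r = z * z `^ (r - 1).
    move=> z0; rewrite -{2}(powRr1 z0) -powRD.
      by congr (_ `^ _); ring.
    by rewrite addrC subrK gt_eqF // (lt_le_trans ltr01 r1).
  have hx := pD x x0.
  have hm := pD m (le_trans ler01 m1).
  have r10 : 0 <= r - 1 by lra.
  have hq : x `^ (r - 1) <= m `^ (r - 1).
    by apply: powR_le.
  have q1 : 1 <= m `^ (r - 1).
    have h := @powR_le R (r - 1) 1 m r10 ler01 m1; rewrite powR1 in h; exact h.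
  rewrite hx hm.
  have -> : v = x + 1 by rewrite /x; ring.
  move: hq q1; set q := m `^ (r - 1); set q' := x `^ (r - 1) => hq q1.
  have hF : (x + 1) * (m * q - 1) / (m + 1) * (m + 1) = (x + 1) * (m * q - 1).
    by rewrite divfK // gt_eqF.
  move: hF; set F := (x + 1) * (m * q - 1) / (m + 1) => hF.
  have h1 : x * q' <= x * q by rewrite ler_wpM2l.
  have h2 : x * q * (m + 1) <= (m + 1) + (x + 1) * (m * q - 1) by nra.
  nra.
Qed.

Lemma powR_invr (R : realType) (a s : R) : 0 < a -> (a^-1) `^ s = (a `^ s)^-1.
Proof.
move=> a0.
have h : a `^ s * (a^-1) `^ s = 1.
  by rewrite -powRM ?(ltW a0) ?invr_ge0 ?(ltW a0) // divff ?gt_eqF // powR1.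
have hs : a `^ s != 0 by rewrite gt_eqF // powR_gt0.
by rewrite -[LHS]mul1r -(mulVf hs) -mulrA h mulr1.
Qed.

Lemma pnorm_one (R : realType) k (rr : R) : 1 <= rr ->
  pnorm (EFin rr) (const_mx 1 : 'rV[R]_k) = (k%:R) `^ rr^-1.
Proof.
move=> r1; rewrite /pnorm.
under eq_bigr do rewrite mxE normr1 powR1.
by rewrite sumr_const card_ord.
Qed.

Lemma pnorm_one_inf (R : realType) k :
  pnorm (+oo)%E (const_mx 1 : 'rV[R]_k.+1) = 1.
Proof.
rewrite /pnorm.
apply/eqP; rewrite eq_le; apply/andP; split.
  by apply: bigmax_le => // i _; rewrite mxE normr1.
have h := @le_bigmax _ R _ 0 (fun i : 'I_k.+1 => (`|(const_mx 1 : 'rV[R]_k.+1) 0 i| : R)) ord0.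
apply: le_trans h. by rewrite mxE normr1.
Qed.

Lemma resid (R : realType) m (p : \bar R) (e d : R) (r : 'rV[R]_m) :
  (1 <= p)%E -> 0 < e ->
  d = e / pnorm p (const_mx 1 : 'rV[R]_(m + 1)) ->
  (forall i, 0 <= r 0 i + d) -> \sum_i (r 0 i + d) <= (m%:R + 1) * d ->
  pnorm p r <= kappa_bar m p * e.
Proof.
case: p => [rr | | ] // r1 e0 hd hpos hsum; rewrite ?lee_fin in r1; rewrite /kappa_bar.
- have rr0 : 0 < rr by apply: lt_le_trans r1.
  have rinv0 : rr^-1 != 0 by rewrite invr_eq0 gt_eqF.
  rewrite pnorm_one // addn1 in hd.
  have P10 : 0 < m.+1%:R `^ rr^-1 :> R by rewrite powR_gt0 // ltr0Sn.
  have d0 : 0 < d by rewrite hd divr_gt0.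
  case: m r hpos hsum hd P10 => [|n] r hpos hsum hd P10.
    rewrite /pnorm big_ord0 powR0 // mulr_ge0 // ?powR_ge0 // ltW //.
  set mR := n.+1%:R : R.
  have mR1 : 1 <= mR by rewrite /mR ler1n.
  set K := (mR `^ rr - 1) / (mR + 1).
  have K0 : 0 <= K.
    rewrite /K divr_ge0 // ?subr_ge0; last by lra.
    have h := @powR_le R rr 1 mR (ltW rr0) ler01 mR1; rewrite powR1 in h; exact h.
  have each i : `|r 0 i| `^ rr <= d `^ rr * (1 + (r 0 i + d) / d * K).
    have hv : `|r 0 i| = d * `|(r 0 i + d) / d - 1|.
      rewrite -(ger0_norm (ltW d0)) -normrM (ger0_norm (ltW d0)); congr `|_|.
      by field; rewrite gt_eqF.
    rewrite hv powRM ?(ltW d0) // ler_wpM2l ?powR_ge0 //.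
    rewrite /K mulrA; apply: scal_ineq => //.
      by rewrite divr_ge0 // ltW.
    rewrite ler_pdivrMr //.
    apply: le_trans hsum; rewrite -/mR.
    exact: (@le_sum1 _ _ (fun j => r 0 j + d) i hpos).
  set Q := mR `^ rr + mR - 1.
  have Mge1 : 1 <= mR `^ rr.
    have h := @powR_le R rr 1 mR (ltW rr0) ler01 mR1; rewrite powR1 in h; exact h.
  have Q0 : 0 <= Q by rewrite /Q; lra.
  have mR10 : 0 < mR + 1 by lra.
  have hS : \sum_i `|r 0 i| `^ rr <= d `^ rr * Q.
    apply: le_trans (ler_sum _ (fun i _ => each i)) _.
    rewrite -mulr_sumr ler_wpM2l ?powR_ge0 //.
    rewrite big_split /= sumr_const card_ord -!mulr_suml.
    have hv : (\sum_i (r 0 i + d)) / d <= mR + 1.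
      by rewrite ler_pdivrMr // mulrC.
    have hK : K * (mR + 1) = mR `^ rr - 1 by rewrite /K divfK // gt_eqF.
    have : (\sum_i (r 0 i + d)) / d * K <= (mR + 1) * K by rewrite ler_wpM2r.
    rewrite /Q -/mR; move: hK; set S := _ * K; set S' := _ * K.
    have : S' = K * (mR + 1) by rewrite /S' mulrC.
    move=> ->; move=> hK hS.
    lra.
  set s := rr^-1.
  have s0 : 0 <= s by rewrite /s invr_ge0 ltW.
  rewrite /pnorm -/s.
  apply: le_trans (@powR_le R s _ _ s0 (sumr_ge0 _ (fun i _ => powR_ge0 _ _)) hS) _.
  rewrite powRM ?powR_ge0 // -powRrM /s mulfV ?gt_eqF // powRr1 ?(ltW d0) //.
  have h2 : n.+2%:R = mR + 1 :> R by rewrite /mR -[n.+2]addn1 natrD.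
  rewrite hd h2 powRM // ?invr_ge0 ?(ltW mR10) // powR_invr //.
  rewrite -/s /Q; lra.
- rewrite addn1 pnorm_one_inf divr1 in hd; subst d.
  rewrite /pnorm.
  have m0 : 0 <= m%:R :> R by [].
  apply: bigmax_le => [|i _]; first by rewrite mulr_ge0 // ltW.
  have m1 : 1 <= m%:R :> R by rewrite ler1n (leq_ltn_trans (leq0n i) (ltn_ord i)).
  have h1 := hpos i.
  have h2 := (@le_sum1 _ _ (fun j => r 0 j + e) i hpos).
  have h3 : m%:R * e >= e by rewrite ler_peMl // ltW.
  have h4 : (m%:R + 1) * e = m%:R * e + e by rewrite mulrDl mul1r.
  rewrite ler_norml; apply/andP; split; move: hsum h3 h4; set q := m%:R * e; lra.
Qed.

Theorem mainTheorem7 (R : realType) (n m : nat)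
  (S : set ('rV[R]_n * 'rV[R]_m)) (p : \bar R) (e : R)
  (Sbar : set ('rV[R]_n * 'rV[R]_m)) :
  convex_prod S ->
  MOCP_self_bounded S ->
  (1 <= p)%E ->
  0 < e ->
  MOCP_finite_eps_sol p e S Sbar ->
  CP_finite_eps_sol p (kappa_bar m p * e) S Sbar.
Proof.
move=> convS _ hp e0 [finSb neSb subSb hMO].
split => // y [z Sz <-].
set dl := e / pnorm p (const_mx 1 : 'rV[R]_(m + 1)).
have Pz : upper_image S (Pobj z).
  apply: subset_closure; exists (Pobj z); first by exists z.
  by exists 0; [move=> i; rewrite mxE | rewrite addr0].
have [cdd [cc hcc [d hd hcd]] [ob ho ho_eq]] := hMO _ Pz.
move: ho => /= ho; subst ob.
have [N [lam [a [lam0 lam1 aS cc_eq]]]] := hcc.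
have : forall i : 'I_N, exists s, Sbar s /\ Pobj s = a i.
  by move=> i; case: (aS i) => s hs hs'; exists s.
move=> /choice [sb hsb].
pose ya : 'rV[R]_m := \sum_i lam i *: (sb i).2.
have conv_ya : Defs.conv (snd @` Sbar) ya.
  exists N, lam, (fun i => (sb i).2); split => // i.
  by exists (sb i) => //; case: (hsb i).
pose w : 'rV[R]_m := \row_j d 0 (lshift 1 j).
pose t : R := d 0 (rshift m ord0).
set y0 := z.2.
have E1 j : y0 0 j = ya 0 j + w 0 j - dl.
  have := congr1 (fun M : 'rV[R]_(m+1) => M 0 (lshift 1 j)) ho_eq.
  rewrite /= -hcd cc_eq /Pobj row_mxEl !mxE summxE -/y0.
  under eq_bigr => i _ do rewrite mxE -(proj2 (hsb i)) /Pobj row_mxEl.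
  move=> <-; rewrite mulr1; congr (_ + _ - _).
  by rewrite /ya summxE; apply: eq_bigr => i _; rewrite mxE.
have hya : \sum_j ya 0 j = \sum_i lam i * \sum_j (sb i).2 0 j.
  rewrite /ya; under eq_bigr => j _ do rewrite summxE.
  under eq_bigr => j _ do under eq_bigr => i _ do rewrite mxE.
  rewrite exchange_big /=; apply: eq_bigr => i _; by rewrite mulr_sumr.
have E2 : - \sum_j y0 0 j = - \sum_j ya 0 j + t - dl.
  have := congr1 (fun M : 'rV[R]_(m+1) => M 0 (rshift m ord0)) ho_eq.
  rewrite /= -hcd cc_eq /Pobj row_mxEr !mxE summxE -/y0.
  rewrite (eq_bigr (fun i => lam i * - \sum_j (sb i).2 0 j)); last first.
    by move=> i _; rewrite mxE -(proj2 (hsb i)) /Pobj row_mxEr mxE.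
  move=> <-; rewrite mulr1 hya /t -sumrN.
  by congr (_ + _ - _); apply: eq_bigr => i _; rewrite mulrN.
have convY : forall a b, CP_Y S a -> CP_Y S b -> forall tt : R, 0 <= tt <= 1 ->
    CP_Y S (tt *: a + (1 - tt) *: b).
  move=> _ _ [za Sa <-] [zb Sb <-] tt htt.
  by exists (tt *: za.1 + (1 - tt) *: zb.1, tt *: za.2 + (1 - tt) *: zb.2) => //; apply: convS.
have eD (A B : 'rV[R]_(m+1)) j : (A + B) 0 j = A 0 j + B 0 j by rewrite mxE.
have eZ (a0 : R) (A : 'rV[R]_(m+1)) j : (a0 *: A) 0 j = a0 * A 0 j by rewrite mxE.
have Pl z1 j : Pobj z1 0 (lshift 1 j) = z1.2 0 j by rewrite /Pobj row_mxEl.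
have Pr z1 : Pobj z1 0 (rshift m ord0) = - \sum_i z1.2 0 i by rewrite /Pobj row_mxEr mxE.
have hyp : forall N0 : nat, exists yu : 'rV[R]_m * 'rV[R]_m,
  [/\ CP_Y S yu.1, (forall i, 0 <= yu.2 0 i),
      (forall i, `|yu.1 0 i + yu.2 0 i - y0 0 i - N0.+1%:R * w 0 i| < 1) &
      \sum_i yu.2 0 i <= N0.+1%:R * (\sum_j w 0 j + t) + (m%:R + 1)].
  move=> N0.
  have := hd _ Pz N0.+1%:R (ler0n _ _).
  case/closure_rVP/(_ 1 ltr01) => aa [[pz [z' Sz' <-] [ob' hob' <-]] hA].
  exists (z'.2, \row_j ob' 0 (lshift 1 j)); split => /=.
  - by exists z'.
  - by move=> i; rewrite mxE; apply: hob'.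
  - move=> i; have := hA (lshift 1 i).
    rewrite !eD eZ !Pl -/y0 !mxE.
    set A1 := z'.2 0 i; set A2 := ob' 0 (lshift 1 i); set A3 := y0 0 i.
    set A4 := N0.+1%:R * d 0 (lshift 1 i).
    have -> : A1 + A2 - A3 - A4 = - (A3 + A4 - (A1 + A2)) by ring.
    by rewrite normrN.
  - have hl : forall i, ob' 0 (lshift 1 i) <= y0 0 i + N0.+1%:R * w 0 i - z'.2 0 i + 1.
      move=> i; have := hA (lshift 1 i).
      rewrite !eD eZ !Pl -/y0 ltr_norml => /andP[h _].
      rewrite /w mxE; move: h; set NN := N0.+1%:R * _; lra.
    have hr := hA (rshift m ord0).
    rewrite !eD eZ !Pr -/y0 ltr_norml in hr; case/andP: hr => hr1 _.
    have hor := hob' (rshift m ord0).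
    rewrite (eq_bigr (fun i => ob' 0 (lshift 1 i))); last by move=> i _; rewrite mxE.
    apply: le_trans (ler_sum _ (fun i _ => hl i)) _.
    rewrite !big_split /= sumrN -mulr_sumr sumr_const card_ord.
    move: hr1 hor; rewrite /t.
    set s1 := \sum_i y0 0 i; set s2 := \sum_i z'.2 0 i; set s3 := \sum_i w 0 i.
    set tt := d 0 (rshift m ord0); set o1 := ob' 0 (rshift m ord0).
    have -> : (1 : R) *+ m = m%:R by [].
    move: (N0.+1%:R : R) => NN.
    nra.
move: hyp => /choice [yu hyu].
have [u [u0 clu usum]] := @key_cluster R m (fun N => (yu N).2) (\sum_j w 0 j + t) (m%:R + 1)
  (ltac:(by rewrite addr_ge0)) (fun N => let: And4 _ h _ _ := hyu N in h)
  (fun N => let: And4 _ _ _ h := hyu N in h).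
have rk := @key_rec R m (CP_Y S) y0 w (fun N => (yu N).1) (fun N => (yu N).2) u convY
  (fun N => let: And4 h _ _ _ := hyu N in h) (fun N => let: And4 _ _ h _ := hyu N in h) clu.
have sw : \sum_j w 0 j = \sum_j y0 0 j - \sum_j ya 0 j + dl *+ m.
  rewrite (eq_bigr (fun j => y0 0 j - ya 0 j + dl)); last by move=> j _; rewrite E1; ring.
  by rewrite big_split /= sumrB sumr_const card_ord.
have hc : \sum_j w 0 j + t = (m%:R + 1) * dl.
  rewrite sw mulrDl mul1r mulr_natl; move: E2; set s1 := \sum_j y0 0 j.
  set s2 := \sum_j ya 0 j; set q := dl *+ m; lra.
exists (ya + (w - u)).
  by exists ya => //; exists (w - u).
exists (y0 - ya - (w - u)); last first.
  by apply/rowP => j; rewrite !mxE; ring.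
rewrite /pball /=.
apply: (@resid R m p e dl) => //.
  by move=> i; rewrite !mxE E1 /w !mxE; have := u0 i; lra.
rewrite (eq_bigr (fun i => u 0 i)); last by move=> i _; rewrite !mxE E1 /w !mxE; ring.
by rewrite -hc.
Qed.
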